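(* For every term $t$ over $\Sigma_f(X)$, the equation $0\cdot t=0\cdot\sum_{x\in\mathsf{VAR}(t)}x$ is derivable in equational logic from $\mathsf{Md}_\bot$, where the empty sum is $0$.
   Context: $\Sigma_f$ is the signature with one sort, constants $0,1$, binary operations $+,\cdot$ and unary operation $-$; $\Sigma_{md,\bot}$ extends it with a constant $\bot$ and a unary operation $(\,\cdot\,)^{-1}$. $\Sigma_f(X)$ denotes terms over $\Sigma_f$ with variables from $X$, and $\mathsf{VAR}(t)$ is the set of variables occurring in $t$. $\mathsf{Md}_\bot$ is the set of $\Sigma_{md,\bot}$-equations (variables universally quantified): $(x+y)+z=x+(y+z)$; $x+y=y+x$; $x+0=x$; $x+(-x)=0\cdot x$; $(x\cdot y)\cdot z=x\cdot(y\cdot z)$; $x\cdot y=y\cdot x$; $1\cdot x=x$; $x\cdot(y+z)=x\cdot y+x\cdot z$; $-(-x)=x$; $0\cdot(x\cdot x)=0\cdot x$; $(x^{-1})^{-1}=x+0\cdot x^{-1}$; $x\cdot x^{-1}=1+0\cdot x^{-1}$; $(x\cdot y)^{-1}=x^{-1}\cdot y^{-1}$; $1^{-1}=1$; $0^{-1}=\bot$; $x+\bot=\bot$; $x\cdot\bot=\bot$. *)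

(* Defs.v *)
From mathcomp Require Import all_boot.
From Stdlib Require List.
Set Implicit Arguments. Unset Strict Implicit. Unset Printing Implicit Defensive.

Inductive term (X : Type) : Type :=
| Var : X -> term X
| Zero : term X
| One : term X
| Bot : term X
| Add : term X -> term X -> term X
| Mul : term X -> term X -> term X
| Opp : term X -> term X
| Inv : term X -> term X.

Arguments Zero {X}. Arguments One {X}. Arguments Bot {X}.

Fixpoint is_f_term (X : Type) (t : term X) : bool :=
  match t with
  | Var _ | Zero | One => true
  | Bot | Inv _ => false
  | Add a b | Mul a b => is_f_term a && is_f_term b
  | Opp a => is_f_term a
  end.

Fixpoint vars (X : Type) (t : term X) : seq X :=
  match t with
  | Var x => [:: x]
  | Zero | One | Bot => [::]
  | Add a b | Mul a b => vars a ++ vars b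
  | Opp a | Inv a => vars a
  end.

Definition VAR (X : eqType) (t : term X) : seq X := undup (vars t).

Fixpoint sum_vars (X : Type) (s : seq X) : term X :=
  match s with
  | [::] => Zero
  | [:: x] => Var x
  | x :: s' => Add (Var x) (sum_vars s')
  end.

Fixpoint subst (X Y : Type) (sigma : X -> term Y) (t : term X) : term Y :=
  match t with
  | Var x => sigma x
  | Zero => Zero
  | One => One
  | Bot => Bot
  | Add a b => Add (subst sigma a) (subst sigma b)
  | Mul a b => Mul (subst sigma a) (subst sigma b)
  | Opp a => Opp (subst sigma a)
  | Inv a => Inv (subst sigma a)
  end.

Definition vx : term nat := Var 0.
Definition vy : term nat := Var 1.
Definition vz : term nat := Var 2.

Definition Md_bot : seq (term nat * term nat) :=
  [:: (Add (Add vx vy) vz, Add vx (Add vy vz));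
      (Add vx vy, Add vy vx);
      (Add vx Zero, vx);
      (Add vx (Opp vx), Mul Zero vx);
      (Mul (Mul vx vy) vz, Mul vx (Mul vy vz));
      (Mul vx vy, Mul vy vx);
      (Mul One vx, vx);
      (Mul vx (Add vy vz), Add (Mul vx vy) (Mul vx vz));
      (Opp (Opp vx), vx);
      (Mul Zero (Mul vx vx), Mul Zero vx);
      (Inv (Inv vx), Add vx (Mul Zero (Inv vx)));
      (Mul vx (Inv vx), Add One (Mul Zero (Inv vx)));
      (Inv (Mul vx vy), Mul (Inv vx) (Inv vy));
      (Inv One, One);
      (Inv Zero, Bot);
      (Add vx Bot, Bot);
      (Mul vx Bot, Bot)].

Inductive derivable (E : seq (term nat * term nat)) (X : Type)
  : term X -> term X -> Prop :=
| d_refl t : derivable E t t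
| d_sym s t : derivable E s t -> derivable E t s
| d_trans s t u : derivable E s t -> derivable E t u -> derivable E s u
| d_ax (l r : term nat) (sigma : nat -> term X) :
    Stdlib.Lists.List.In (l, r) E -> derivable E (subst sigma l) (subst sigma r)
| d_add a a' b b' : derivable E a a' -> derivable E b b' ->
    derivable E (Add a b) (Add a' b')
| d_mul a a' b b' : derivable E a a' -> derivable E b b' ->
    derivable E (Mul a b) (Mul a' b')
| d_opp a a' : derivable E a a' -> derivable E (Opp a) (Opp a')
| d_inv a a' : derivable E a a' -> derivable E (Inv a) (Inv a').

(* Main.v *)
Require Import Defs.
From mathcomp Require Import all_boot.
From Stdlib Require Import Setoid Morphisms.

Set Implicit Arguments. Unset Strict Implicit.

Section Tool.
Variable X : Type.
Local Notation D := (@derivable Md_bot X).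

Lemma D_refl (a : term X) : D a a. Proof. exact: d_refl. Qed.
Hint Resolve d_refl : core.
Lemma D_sym (a b : term X) : D a b -> D b a. Proof. exact: d_sym. Qed.
Lemma D_trans (a b c : term X) : D a b -> D b c -> D a c. Proof. exact: d_trans. Qed.

Global Add Parametric Relation : (term X) (@derivable Md_bot X)
  reflexivity proved by D_refl symmetry proved by D_sym
  transitivity proved by D_trans as D_rel.

Global Add Parametric Morphism : (@Add X) with signature
  (@derivable Md_bot X) ==> (@derivable Md_bot X) ==> (@derivable Md_bot X) as Add_mor.
Proof. by move=> *; apply: d_add. Qed.
Global Add Parametric Morphism : (@Mul X) with signature
  (@derivable Md_bot X) ==> (@derivable Md_bot X) ==> (@derivable Md_bot X) as Mul_mor.
Proof. by move=> *; apply: d_mul. Qed.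
Global Add Parametric Morphism : (@Opp X) with signature
  (@derivable Md_bot X) ==> (@derivable Md_bot X) as Opp_mor.
Proof. by move=> *; apply: d_opp. Qed.

Definition sg3 (a b c : term X) (n : nat) : term X :=
  match n with 0 => a | 1 => b | _ => c end.

Ltac axm l r a b c :=
  apply: (@d_ax Md_bot X l r (sg3 a b c)); rewrite /Md_bot /=; intuition.

Lemma addA a b c : D (Add (Add a b) c) (Add a (Add b c)).
Proof. axm (Add (Add vx vy) vz) (Add vx (Add vy vz)) a b c. Qed.
Lemma addC a b : D (Add a b) (Add b a).
Proof. axm (Add vx vy) (Add vy vx) a b a. Qed.
Lemma add0 a : D (Add a Zero) a.
Proof. axm (Add vx Zero) vx a a a. Qed.
Lemma addN a : D (Add a (Opp a)) (Mul Zero a).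
Proof. axm (Add vx (Opp vx)) (Mul Zero vx) a a a. Qed.
Lemma mulA a b c : D (Mul (Mul a b) c) (Mul a (Mul b c)).
Proof. axm (Mul (Mul vx vy) vz) (Mul vx (Mul vy vz)) a b c. Qed.
Lemma mulC a b : D (Mul a b) (Mul b a).
Proof. axm (Mul vx vy) (Mul vy vx) a b a. Qed.
Lemma mul1 a : D (Mul One a) a.
Proof. axm (Mul One vx) vx a a a. Qed.
Lemma mulD a b c : D (Mul a (Add b c)) (Add (Mul a b) (Mul a c)).
Proof. axm (Mul vx (Add vy vz)) (Add (Mul vx vy) (Mul vx vz)) a b c. Qed.
Lemma oppK a : D (Opp (Opp a)) a.
Proof. axm (Opp (Opp vx)) vx a a a. Qed.
Lemma mul0sq a : D (Mul Zero (Mul a a)) (Mul Zero a).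
Proof. axm (Mul Zero (Mul vx vx)) (Mul Zero vx) a a a. Qed.

Lemma add0l a : D (Add Zero a) a.
Proof. by rewrite addC add0. Qed.
Lemma z1 : D (Mul Zero One) Zero.
Proof. by rewrite mulC mul1. Qed.
Lemma onem1 : D (Add One (Opp One)) Zero.
Proof. by rewrite addN z1. Qed.
Lemma zm1 : D (Mul Zero (Opp One)) Zero.
Proof.
rewrite -(addN (Opp One)) (oppK One) addC. exact: onem1.
Qed.
Lemma z0 : D (Mul Zero Zero) Zero.
Proof.
transitivity (Mul Zero (Add (@One X) (Opp One))); first by rewrite onem1.
by rewrite mulD z1 zm1 add0.
Qed.
Lemma zN a : D (Mul Zero (Opp a)) (Mul Zero a).
Proof. by rewrite -(addN (Opp a)) (oppK a) addC addN. Qed.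
Lemma zz a : D (Mul Zero (Mul Zero a)) (Mul Zero a).
Proof. by rewrite -mulA z0. Qed.
Lemma zidem a : D (Add (Mul Zero a) (Mul Zero a)) (Mul Zero a).
Proof. by rewrite !(mulC Zero a) -mulD add0. Qed.
Lemma idem0 c : D (Mul (Mul Zero c) (Mul Zero c)) (Mul Zero c).
Proof.
by rewrite mulA -(mulA c) (mulC c Zero) mulA zz mul0sq.
Qed.
Lemma uvw a b : D (Mul (Mul Zero a) (Mul Zero b)) (Mul Zero (Mul a b)).
Proof. by rewrite mulA -(mulA a) (mulC a Zero) mulA zz. Qed.
Lemma wu a b : D (Add (Mul Zero (Mul a b)) (Mul Zero a)) (Mul Zero (Mul a b)).
Proof.
have h1 : D (Mul Zero (Mul a b)) (Mul a (Mul Zero b)).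
  by rewrite -mulA (mulC Zero a) mulA.
have h2 : D (Mul Zero a) (Mul a Zero) by exact: mulC.
by rewrite h1 h2 -mulD add0.
Qed.
Lemma zmul a b : D (Mul Zero (Mul a b)) (Add (Mul Zero a) (Mul Zero b)).
Proof.
set u := Mul Zero a; set v := Mul Zero b; set w := Mul Zero (Mul a b).
have wv : D (Add w v) w.
  rewrite /w (mulC a b). exact: wu.
have wu' : D (Add w u) w by exact: wu.
have zE : D (Add u v) (Mul Zero (Add a b)) by rewrite mulD.
symmetry.
transitivity (Mul (Add u v) (Add u v)).
  by rewrite zE idem0.
rewrite mulD !(mulC (Add u v)) !mulD idem0 idem0 (mulC v u) uvw -/w.
rewrite -/u -/v (addC u w) wu' wv. exact: zidem.
Qed.
End Tool.

Global Hint Resolve d_refl : core.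
Local Notation D := (derivable Md_bot).

Lemma sumcons (X : Type) (x : X) s :
  D (sum_vars (x :: s)) (Add (Var x) (sum_vars s)).
Proof. case: s => [|y s] //=. by rewrite add0. Qed.

Lemma zapp (X : Type) (s1 s2 : seq X) :
  D (Mul Zero (sum_vars (s1 ++ s2)))
    (Add (Mul Zero (sum_vars s1)) (Mul Zero (sum_vars s2))).
Proof.
elim: s1 => [|x s1 IH]; first by rewrite /= z0 add0l.
rewrite cat_cons !sumcons !mulD IH. by rewrite addA.
Qed.

Lemma absorb (X : eqType) (x : X) s : x \in s ->
  D (Add (Mul Zero (Var x)) (Mul Zero (sum_vars s))) (Mul Zero (sum_vars s)).
Proof.
elim: s => [|y s IH] //; rewrite inE sumcons mulD.
case/orP => [/eqP -> | /IH h].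
  by rewrite -addA zidem.
by rewrite -addA (addC (Mul Zero (Var x))) addA h.
Qed.

Lemma zundup (X : eqType) (s : seq X) :
  D (Mul Zero (sum_vars s)) (Mul Zero (sum_vars (undup s))).
Proof.
elim: s => [|x s IH] //.
have -> : undup (x :: s) = if x \in s then undup s else x :: undup s by [].
case: ifP => hx.
  by rewrite sumcons mulD absorb // IH.
by rewrite !sumcons !mulD IH.
Qed.

Lemma zvars (X : Type) (t : term X) : is_f_term t ->
  D (Mul Zero t) (Mul Zero (sum_vars (vars t))).
Proof.
elim: t => //= [|a IHa b IHb|a IHa b IHb|a IHa].
- by rewrite z1 z0.
- case/andP => ha hb. by rewrite zapp mulD IHa // IHb.
- case/andP => ha hb. by rewrite zapp zmul IHa // IHb.
- move=> ha. by rewrite zN IHa.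
Qed.

Theorem proposition2p4 (X : eqType) (t : term X) :
  is_f_term t ->
  derivable Md_bot (Mul Zero t) (Mul Zero (sum_vars (VAR t))).
Proof. move=> h. rewrite /VAR -zundup. exact: zvars. Qed.
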